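(* For every $h\ge 2$ and $m\ge h$, the secrecy rate $\frac{h-1}{2}$ is achievable (by a $2$-round protocol) over the directed $(m,h)$-CCN against a $1$-node passive adversary.
   Context: Network model: a graph with unit-capacity edges; each use of an edge carries one symbol of a finite field $\mathbb{F}$ (taken sufficiently large), and entropies are measured in units of $\log|\mathbb{F}|$. A single source $S$ holds a message $\mathcal{W}$ to be multicast to a set of receivers. Each node may use its own private randomness; nodes share no prior common randomness and no side channel. An $N$-round protocol: in each round every edge is used at most once. Decodability: every receiver recovers $\mathcal{W}$ with zero error. Secrecy: $H(\mathcal{W}\mid \mathcal{V}_{\mathcal{A}})=H(\mathcal{W})$, where $\mathcal{V}_{\mathcal{A}}$ is the adversary's view over the whole protocol. The secrecy rate is $H(\mathcal{W})/N$. A $1$-node passive adversary may choose any single node other than the source and the receivers and observes all values delivered to that node; secrecy must hold for every such choice. Directed $(m,h)$-CCN ($m\ge h$): nodes $S$, $S_1,\dots,S_h$, $A_1,\dots,A_m$, $B_1,\dots,B_m$, and $\binom{m}{h}$ receivers, one per $h$-subset of $\{B_1,\dots,B_m\}$. Directed edges: $S\to S_i$ ($1\le i\le h$); $S_i\to A_i$ ($1\le i\le h$); $S_i\to A_j$ for all $1\le i\le h$, $h<j\le m$; $A_j\to B_j$ ($1\le j\le m$); $B_j\to R$ whenever $B_j$ is in the $h$-subset of receiver $R$. *)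

(* Defs.v *)
From HB Require Import structures.
From mathcomp Require Import all_boot all_order all_algebra all_field.
Set Implicit Arguments. Unset Strict Implicit. Unset Printing Implicit Defensive.

(* The directed (m,h)-CCN.  Indices are 0-based:                       *)
(*   S_i  (i : 'I_h)  is S_{i+1} of the paper,                          *)
(*   A_j, B_j (j : 'I_m) are A_{j+1}, B_{j+1},                          *)
(*   receivers are indexed by the h-subsets T of {B_1..B_m}.            *)

Definition recv (m h : nat) := {T : {set 'I_m} | #|T| == h}.

Definition node (m h : nat) : finType :=
  ((((unit + 'I_h) + 'I_m) + 'I_m) + recv m h)%type.

Definition nS {m h} : node m h := inl (inl (inl (inl tt))).
Definition nSi {m h} (i : 'I_h) : node m h := inl (inl (inl (inr i))).
Definition nA {m h} (j : 'I_m) : node m h := inl (inl (inr j)).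
Definition nB {m h} (j : 'I_m) : node m h := inl (inr j).
Definition nR {m h} (T : recv m h) : node m h := inr T.

Definition is_source {m h} (u : node m h) : bool :=
  match u with inl (inl (inl (inl _))) => true | _ => false end.
Definition is_receiver {m h} (u : node m h) : bool :=
  match u with inr _ => true | _ => false end.

(* directed edge relation of the (m,h)-CCN:
   S -> S_i ;  S_i -> A_i ;  S_i -> A_j (j > h, 1-based) ;  A_j -> B_j ;
   B_j -> R_T when B_j is in T. *)
Definition is_edge {m h} (u v : node m h) : bool :=
  match u, v with
  | inl (inl (inl (inl _))), inl (inl (inl (inr _))) => true
  | inl (inl (inl (inr i))), inl (inl (inr j)) =>
      (nat_of_ord j == nat_of_ord i) || (h <= nat_of_ord j)
  | inl (inl (inr j)), inl (inr j') => j == j'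
  | inl (inr j), inr T => j \in val T
  | _, _ => false
  end.

Definition edge (m h : nat) : finType :=
  {e : node m h * node m h | is_edge e.1 e.2}.
Definition etail {m h} (e : edge m h) : node m h := (val e).1.
Definition ehead {m h} (e : edge m h) : node m h := (val e).2.

(* Values delivered to node u in rounds 0..t (as a finite function on
   (round, edge); entries for other edges/rounds are set to 0). *)
Definition hist {F : finFieldType} {m h N}
  (ex : 'I_N -> edge m h -> F) (u : node m h) (t : nat)
  : {ffun 'I_N * edge m h -> F} :=
  [ffun p => if (nat_of_ord p.1 <= t) && (ehead p.2 == u) then ex p.1 p.2 else 0%R].

Definition view {F : finFieldType} {m h N}
  (ex : 'I_N -> edge m h -> F) (u : node m h) : {ffun 'I_N * edge m h -> F} :=
  hist ex u N.

(* An N-round protocol over the (m,h)-CCN over F multicasting a message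
   W uniform on F^d (so H(W) = d in units of log|F|), with every node
   holding private randomness uniform on F^k (independent across nodes),
   that is zero-error decodable at every receiver and perfectly secure
   against a 1-node passive adversary sitting at any node other than the
   source and the receivers.
   - exec w r t e : symbol sent on edge e in round t, given message w and
     the randomness r of all nodes;
   - f : the local encoding functions: the symbol on e = (u,v) in round t
     depends only on w (if u = S), u's private randomness, and the symbols
     delivered to u in rounds <= t (within a round symbols propagate along
     the acyclic network). Since the network is acyclic, exec is uniquely
     determined by f.
   - secrecy: the conditional distribution of the adversary's view given
     W = w does not depend on w (i.e. W and the view are independent,
     H(W | V_A) = H(W)). *)
Definition secure_multicast (F : finFieldType) (m h N d : nat) : Prop :=
  exists k : nat,
  exists exec : 'rV[F]_d -> {ffun node m h -> 'rV[F]_k} -> 'I_N -> edge m h -> F,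
  exists f : 'I_N -> edge m h -> option 'rV[F]_d -> 'rV[F]_k ->
             {ffun 'I_N * edge m h -> F} -> F,
    (forall w (r : {ffun node m h -> 'rV[F]_k}) t e,
        exec w r t e =
        f t e (if is_source (etail e) then Some w else None)
              (r (etail e)) (hist (exec w r) (etail e) t))
    /\ (forall R : node m h, is_receiver R ->
          exists dec : 'rV[F]_k -> {ffun 'I_N * edge m h -> F} -> 'rV[F]_d,
          forall w (r : {ffun node m h -> 'rV[F]_k}), dec (r R) (view (exec w r) R) = w)
    /\ (forall a : node m h, ~~ is_source a -> ~~ is_receiver a ->
          forall (w1 w2 : 'rV[F]_d) (v : {ffun 'I_N * edge m h -> F}),
            #|[set r : {ffun node m h -> 'rV[F]_k} | view (exec w1 r) a == v]|
            = #|[set r : {ffun node m h -> 'rV[F]_k} | view (exec w2 r) a == v]|).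

(* Main.v *)
Require Import Defs.
From HB Require Import structures.
From mathcomp Require Import all_boot all_order all_algebra all_field.
From mathcomp Require Import zify ring lra.
Set Implicit Arguments. Unset Strict Implicit. Unset Printing Implicit Defensive.
Import GRing.Theory.
Local Open Scope ring_scope.

Section Proto.
Variable F : finFieldType.
Variables m h : nat.

Definition nzl : seq F := enum (predC1 (0 : F)).
Definition pt (n : nat) : F := nth 0 nzl n.

Definition Wp (w : 'rV[F]_(h-1)) : {poly F} := rVpoly w.
Definition Sp (rs : 'rV[F]_(h-1+1)) : {poly F} := rVpoly (lsubmx rs).
Definition rho (rs : 'rV[F]_(h-1+1)) : F := rsubmx rs 0 0.
Definition Gp w rs := Wp w + rho rs *: 'X^(h-1).
Definition Tp w rs := Gp w rs + 'X * Sp rs.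

Definition sym (t : 'I_2) (a b : F) := if (t : nat) == 0%N then a else b.

Definition ecore (w : 'rV[F]_(h-1)) (rs : 'rV[F]_(h-1+1)) (t : 'I_2) (u v : node m h) : F :=
  match u, v with
  | inl (inl (inl (inl _))), inl (inl (inl (inr i))) => sym t (Sp rs).[pt i] (Tp w rs).[pt i]
  | inl (inl (inl (inr i))), inl (inl (inr j)) =>
      if (j < h)%N then sym t (Sp rs).[pt i] (Tp w rs).[pt i]
      else sym t 0 ((Tp w rs).[pt i] - pt j * (Sp rs).[pt i])
  | inl (inl (inr j)), inl (inr _) =>
      if (j < h)%N then sym t (Sp rs).[pt j] (Tp w rs).[pt j] else sym t 0 (Gp w rs).[pt j]
  | inl (inr j), inr _ =>
      if (j < h)%N then sym t (Sp rs).[pt j] (Tp w rs).[pt j] else sym t 0 (Gp w rs).[pt j]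
  | _, _ => 0
  end.

Definition interp (vals : 'I_h -> F) (x : F) : F :=
  if [pick c : 'rV[F]_h | [forall i : 'I_h, (rVpoly c).[pt i] == vals i]] is Some c
  then (rVpoly c).[x] else 0.

Definition get (H : {ffun 'I_2 * edge m h -> F}) (t : 'I_2) (x y : node m h) : F :=
  if (insub (x, y) : option (edge m h)) is Some e then H (t, e) else 0.

Definition fcore (t : 'I_2) (u v : node m h) (ow : option 'rV[F]_(h-1)) (rv : 'rV[F]_(h-1+1))
   (H : {ffun 'I_2 * edge m h -> F}) : F :=
  match u, v with
  | inl (inl (inl (inl _))), inl (inl (inl (inr i))) =>
      if ow is Some w then sym t (Sp rv).[pt i] (Tp w rv).[pt i] else 0
  | inl (inl (inl (inr i))), inl (inl (inr j)) =>
      if (j < h)%N then get H t nS (nSi i)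
      else sym t 0 (get H ord_max nS (nSi i) - pt j * get H ord0 nS (nSi i))
  | inl (inl (inr j)), inl (inr _) =>
      if (j < h)%N then (if (insub (val j) : option 'I_h) is Some i then get H t (nSi i) (nA j) else 0)
      else sym t 0 (interp (fun i => get H ord_max (nSi i) (nA j)) (pt j))
  | inl (inr j), inr _ => get H t (nA j) (nB j)
  | _, _ => 0
  end.

Definition exec w (r : {ffun node m h -> 'rV[F]_(h-1+1)}) (t : 'I_2) (e : edge m h) : F :=
  ecore w (r nS) t (etail e) (ehead e).
Definition fx (t : 'I_2) (e : edge m h) ow rv H := fcore t (etail e) (ehead e) ow rv H.


Lemma size_nzl : size nzl = (#|F|).-1.
Proof. by rewrite /nzl -cardE cardC1. Qed.

Lemma pt_nz n : (n < m)%N -> (m < #|F|)%N -> pt n != 0.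
Proof.
move=> hn hF; have hs : (n < size nzl)%N by rewrite size_nzl; lia.
by have := mem_nth 0 hs; rewrite mem_enum inE.
Qed.

Lemma pt_inj n1 n2 : (n1 < m)%N -> (n2 < m)%N -> (m < #|F|)%N -> pt n1 = pt n2 -> n1 = n2.
Proof.
move=> h1 h2 hF e; apply/eqP.
have u : uniq nzl by apply: enum_uniq.
rewrite -(nth_uniq 0 _ _ u) ?size_nzl; first by rewrite /pt in e; rewrite e.
all: lia.
Qed.

Lemma poly_eq_pts (P Q : {poly F}) (rs : seq F) : (size P <= size rs)%N -> (size Q <= size rs)%N ->
  uniq rs -> (forall x, x \in rs -> P.[x] = Q.[x]) -> P = Q.
Proof.
move=> hP hQ u e; apply/eqP; rewrite -subr_eq0; apply/negPn/negP => nz.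
have := max_poly_roots nz _ u.
have -> : all (root (P - Q)) rs by apply/allP => x /e hx; rewrite /root hornerD hornerN hx subrr.
move=> /(_ isT) lt; have := leq_trans lt (size_add P (- Q)); rewrite size_opp leq_max.
by case/orP; rewrite ltnNge ?hP ?hQ.
Qed.

Lemma interpE (P : {poly F}) vals x : (h <= m)%N -> (m < #|F|)%N -> (size P <= h)%N ->
  (forall i : 'I_h, P.[pt i] = vals i) -> interp vals x = P.[x].
Proof.
move=> hm hF hP hv; rewrite /interp.
set rs := [seq pt (nat_of_ord i) | i <- enum 'I_h].
have srs : size rs = h by rewrite size_map size_enum_ord.
have urs : uniq rs.
  rewrite map_inj_uniq ?enum_uniq // => i j e; apply/val_inj/(pt_inj _ _ hF e).
  - by have := ltn_ord i; lia.
  - by have := ltn_ord j; lia.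
case: pickP => [c /forallP hc | /(_ (poly_rV P)) ].
  congr horner; apply: poly_eq_pts urs _ => [||y /mapP [i _ ->]].
  - by rewrite srs size_poly.
  - by rewrite srs.
  - by rewrite (eqP (hc i)) hv.
rewrite poly_rV_K // => /negbT /forallPn [i]; by rewrite hv eqxx.
Qed.

Lemma hornerGp w rs x : (Tp w rs).[x] - x * (Sp rs).[x] = (Gp w rs).[x].
Proof. by rewrite /Tp hornerD hornerM hornerX addrK. Qed.

Lemma size_Sp rs : (size (Sp rs) <= h - 1)%N.
Proof. exact: size_poly. Qed.

Lemma size_Gp w rs : (1 <= h)%N -> (size (Gp w rs) <= h)%N.
Proof.
move=> h1; rewrite /Gp; apply: leq_trans (size_add _ _) _; rewrite geq_max; apply/andP; split.
  by apply: leq_trans (size_poly _ _) _; lia.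
by apply: leq_trans (size_scale_leq _ _) _; rewrite size_polyXn; lia.
Qed.

Lemma size_TSp w rs c : (1 <= h)%N -> (size (Tp w rs - c *: Sp rs)%R <= h)%N.
Proof.
move=> h1; apply: leq_trans (size_add _ _) _; rewrite size_opp geq_max; apply/andP; split.
  rewrite /Tp; apply: leq_trans (size_add _ _) _; rewrite geq_max size_Gp //=.
  have [->|nz] := eqVneq (Sp rs) 0; first by rewrite mulr0 size_poly0.
  rewrite size_mul ?polyX_eq0 // size_polyX /=; have := size_Sp rs; move=> hs; apply: (@leq_trans (size (Sp rs)).+1) => //; lia.
by apply: leq_trans (size_scale_leq c (Sp rs)) _; have := size_Sp rs; lia.
Qed.

Lemma get_hist (ex : 'I_2 -> edge m h -> F) u (t : nat) (t' : 'I_2) x (He : is_edge x u) :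
  (t' <= t)%N -> get (hist ex u t) t' x u = ex t' (exist _ (x, u) He).
Proof.
move=> ht; rewrite /get (@insubT _ (fun e : node m h * node m h => is_edge e.1 e.2) (edge m h) (x, u) He) /hist ffunE /=.
by rewrite ht eqxx.
Qed.

Lemma consistent (hm : (h <= m)%N) (hF : (m < #|F|)%N) (h1 : (1 <= h)%N) w r (t : 'I_2) e :
  exec w r t e = fx t e (if is_source (etail e) then Some w else None) (r (etail e))
                   (hist (exec w r) (etail e) t).
Proof.
case: e => [[u v] He]; rewrite /exec /fx /etail /ehead /=.
move: He; case: u => [[[[[]|i]|j]|j]|T]; case: v => [[[[[]|i']|j']|j']|T'] //= He.
- case: ifP => hj; first by rewrite (@get_hist _ (nSi i) t t nS isT).
  rewrite /sym; case: eqP => // t0.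
  have ht : (1 <= t)%N by case: t t0 => [[|[|]]].
  by rewrite !(@get_hist _ (nSi i) t _ nS isT).
- case: ifP => hj.
    rewrite insubT /=.
    have He2 : is_edge (nSi (Sub (val j) hj : 'I_h)) (nA j) by rewrite /= eqxx.
    by rewrite (get_hist _ He2) //= hj.
  rewrite /sym; case: eqP => // t0.
  rewrite (@interpE (Tp w (r nS) - pt j *: Sp (r nS))) //; last first.
  + move=> i; have He2 : is_edge (nSi i) (nA j) by rewrite /= leqNgt hj orbT.
    rewrite (get_hist _ He2) //=; last by case: t t0 => [[|[|]]].
    by rewrite hj hornerD hornerN hornerZ.
  + by apply: size_TSp.
  by rewrite hornerD hornerN hornerZ hornerGp.
- have He2 : is_edge (nA j : node m h) (nB j) by rewrite /= eqxx.
  by rewrite (get_hist _ He2).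
Qed.

Lemma SpD rs D : Sp (rs + D) = Sp rs + Sp D.
Proof. by rewrite /Sp !raddfD. Qed.

Lemma rhoD rs D : rho (rs + D) = rho rs + rho D.
Proof. by rewrite /rho raddfD mxE. Qed.

Lemma Sp_row (A : 'rV[F]_(h-1)) (B : 'rV[F]_1) : Sp (row_mx A B) = rVpoly A.
Proof. by rewrite /Sp row_mxKl. Qed.

Lemma rho_row (A : 'rV[F]_(h-1)) (B : 'rV[F]_1) : rho (row_mx A B) = B 0 0.
Proof. by rewrite /rho row_mxKr. Qed.

Lemma GpD w rs D : Gp w (rs + D) = Gp w rs + rho D *: 'X^(h-1).
Proof. by rewrite /Gp rhoD scalerDl addrA. Qed.

Definition cst (w1 w2 : 'rV[F]_(h-1)) (x : F) : F := ((Wp w1).[x] - (Wp w2).[x]) / x ^+ (h-1).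
Definition Drho w1 w2 x : 'rV[F]_(h-1+1) := row_mx 0 (cst w1 w2 x)%:M.
Definition Dpoly w1 w2 x : {poly F} :=
  (Wp w1 - Wp w2 - cst w1 w2 x *: 'X^(h-1)) %/ ('X - x%:P).
Definition Dfull w1 w2 x : 'rV[F]_(h-1+1) := row_mx (poly_rV (Dpoly w1 w2 x)) (cst w1 w2 x)%:M.

Lemma Drho_Sp w1 w2 x rs : Sp (rs + Drho w1 w2 x) = Sp rs.
Proof. by rewrite SpD Sp_row linear0 addr0. Qed.

Lemma Drho_Gp w1 w2 x rs : x != 0 -> (Gp w2 (rs + Drho w1 w2 x)).[x] = (Gp w1 rs).[x].
Proof.
move=> nx; rewrite GpD rho_row mxE eqxx mulr1n /Gp !hornerD !hornerZ hornerXn.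
rewrite /cst divfK ?expf_neq0 //.
ring.
Qed.

Lemma Drho_Tp w1 w2 x rs : x != 0 -> (Tp w2 (rs + Drho w1 w2 x)).[x] = (Tp w1 rs).[x].
Proof.
move=> nx; rewrite /Tp hornerD Drho_Gp // Drho_Sp; by rewrite hornerD.
Qed.

Lemma Dfull_TS w1 w2 x rs : x != 0 -> (1 <= h)%N ->
  Tp w2 (rs + Dfull w1 w2 x) - x *: Sp (rs + Dfull w1 w2 x) = Tp w1 rs - x *: Sp rs.
Proof.
move=> nx h1.
set c := cst w1 w2 x.
set Del := Wp w1 - Wp w2 - c *: 'X^(h-1).
have rD : root Del x.
  rewrite /root /Del !hornerD !hornerN hornerZ hornerXn /c /cst divfK ?expf_neq0 //.
  by rewrite subrr.
have hQ : Dpoly w1 w2 x * ('X - x%:P) = Del by rewrite /Dpoly divpK // dvdp_XsubCl.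
have sD : (size Del <= h)%N.
  apply: leq_trans (size_add _ _) _; rewrite size_opp geq_max; apply/andP; split.
    apply: leq_trans (size_add _ _) _; rewrite size_opp geq_max !(leq_trans (size_poly _ _)) //; lia.
  by apply: leq_trans (size_scale_leq _ _) _; rewrite size_polyXn; lia.
have sQ : (size (Dpoly w1 w2 x) <= h - 1)%N.
  by rewrite /Dpoly size_divp ?polyXsubC_eq0 // size_XsubC -/Del; exact: leq_sub2r _ sD.
have e1 : Wp w1 = Wp w2 + c *: 'X^(h-1) + Dpoly w1 w2 x * ('X - x%:P).
  by rewrite hQ /Del; ring.
rewrite /Tp /Gp SpD Sp_row poly_rV_K // rhoD rho_row mxE eqxx mulr1n e1 -/c.
rewrite -!mul_polyC; ring.
Qed.

Definition shift (D : 'rV[F]_(h-1+1)) (r : {ffun node m h -> 'rV[F]_(h-1+1)}) :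
  {ffun node m h -> 'rV[F]_(h-1+1)} := [ffun x => if is_source x then r x + D else r x].

Lemma shift_inj D : injective (shift D).
Proof.
move=> r1 r2 e; apply/ffunP => x; have := congr1 (fun f : {ffun node m h -> _} => f x) e; rewrite !ffunE.
by case: ifP => // _ /addIr.
Qed.

Lemma view_val (ex : 'I_2 -> edge m h -> F) a (t : 'I_2) e :
  view ex a (t, e) = if ehead e == a then ex t e else 0.
Proof. by rewrite /view /hist ffunE /= ltnW. Qed.

Lemma view_eq a w1 w2 D :
  (forall rs t u, is_edge u a -> ecore w2 (rs + D) t u a = ecore w1 rs t u a) ->
  forall r, view (exec w2 (shift D r)) a = view (exec w1 r) a.
Proof.
move=> H r; apply/ffunP => [[t [[u v] He]]]; rewrite !view_val /exec /ehead /etail /=.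
case: eqP => //= ev; move: He; rewrite ev => He.
by rewrite ffunE /= H.
Qed.

Lemma card_eq a w1 w2 D v :
  (forall r, view (exec w2 (shift D r)) a = view (exec w1 r) a) ->
  #|[set r | view (exec w1 r) a == v]| = #|[set r | view (exec w2 r) a == v]|.
Proof.
move=> H; symmetry; rewrite -(card_preimset _ (@shift_inj D)).
by apply: eq_card => r; rewrite !inE H.
Qed.

Lemma secure_node (hm : (h <= m)%N) (hF : (m < #|F|)%N) (h1 : (1 <= h)%N) (a : node m h) :
  ~~ is_source a -> ~~ is_receiver a -> forall w1 w2,
  exists D, forall r, view (exec w2 (shift D r)) a = view (exec w1 r) a.
Proof.
have nzi (i : 'I_h) : pt i != 0 by apply: pt_nz => //; have := ltn_ord i; lia.
have nzj (j : 'I_m) : pt j != 0 by apply: pt_nz.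
case: a => [[[[[]|i]|j]|j]|T] //= _ _ w1 w2.
- exists (Drho w1 w2 (pt i)); apply: view_eq => rs t.
  case=> [[[[[]|?]|?]|?]|?] //= _.
  by rewrite Drho_Sp Drho_Tp.
- case: (ltnP j h) => hj.
    exists (Drho w1 w2 (pt j)); apply: view_eq => rs t.
    case=> [[[[[]|i]|?]|?]|?] //=; rewrite hj leqNgt hj orbF => /eqP ij.
    by rewrite -ij Drho_Sp Drho_Tp.
  exists (Dfull w1 w2 (pt j)); apply: view_eq => rs t.
  case=> [[[[[]|i]|?]|?]|?] //= _; rewrite ltnNge hj /=.
  have := congr1 (horner^~ (pt i)) (Dfull_TS w1 w2 rs (nzj j) h1).
  by rewrite !hornerD !hornerN !hornerZ => ->.
- exists (Drho w1 w2 (pt j)); apply: view_eq => rs t.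
  case=> [[[[[]|?]|j']|?]|?] //= /eqP ->.
  by rewrite Drho_Sp Drho_Tp // Drho_Gp.
Qed.

Lemma decode_inj (hm : (h <= m)%N) (hF : (m < #|F|)%N) (h1 : (1 <= h)%N) (T : recv m h) w w' r r' :
  view (exec w r) (nR T) = view (exec w' r') (nR T) -> w = w'.
Proof.
move=> E.
have key : forall j : 'I_m, j \in val T -> (Gp w (r nS)).[pt j] = (Gp w' (r' nS)).[pt j].
  move=> j jT.
  have He : is_edge (nB j : node m h) (nR T) by [].
  pose e : edge m h := exist _ (nB j, nR T) He.
  have E0 := congr1 (fun f : {ffun 'I_2 * edge m h -> F} => f (ord0, e)) E.
  have E1 := congr1 (fun f : {ffun 'I_2 * edge m h -> F} => f (ord_max, e)) E.
  move: E0 E1; rewrite /= !view_val /= eqxx /exec /=.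
  by case: ifP => hj; rewrite /sym /= => E0 E1 //; rewrite -!hornerGp E0 E1.
have eqG : Gp w (r nS) = Gp w' (r' nS).
  set rs := [seq pt (nat_of_ord j) | j <- enum (val T)].
  have srs : size rs = h by rewrite size_map -cardE; by case: T {E key rs} => ? /= /eqP.
  apply: (@poly_eq_pts _ _ rs); rewrite ?srs ?size_Gp //.
    rewrite map_inj_in_uniq ?enum_uniq // => i j _ _ e; apply/val_inj/(pt_inj _ _ hF e) => //.
  by move=> x /mapP [j jT ->]; apply: key; rewrite -mem_enum.
apply/rowP => i.
have := congr1 (fun p : {poly F} => p`_i) eqG.
rewrite /Gp !coefD !coefZ coefXn /Wp !coef_rVpoly_ord.
have -> : (nat_of_ord i == (h - 1)%N) = false by apply/negbTE; rewrite neq_ltn ltn_ord.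
by rewrite !mulr0 !addr0.
Qed.

End Proto.

Local Close Scope ring_scope.
Theorem mainTheorem3 (h m : nat) (hh : 2 <= h) (hm : h <= m) :
  exists q0 : nat, forall F : finFieldType, q0 <= #|F| ->
    secure_multicast F m h 2 (h - 1).
Proof.
exists m.+1 => F hF.
have h1 : (1 <= h)%N by lia.
exists (h - 1 + 1), (@exec F m h), (@fx F m h).
split; [|split].
- move=> w r t e; exact: consistent.
- case=> // T _.
  exists (fun _ v => if [pick w | [exists r, view (@exec F m h w r) (nR T) == v]] is Some w then w else 0%R).
  move=> w r; case: pickP => [w' /existsP [r' /eqP E]|].
    exact: (decode_inj hm hF h1 E).
  by move=> /(_ w) /existsP; case; exists r.
- move=> a ns nr w1 w2 v.
  have [D HD] := secure_node hm hF h1 ns nr w1 w2.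
  exact: card_eq HD.
Qed.
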